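(* Assume the setting in the context (in particular the Causal Faithfulness Condition). Let $x_i,x_j,x_k\in X$ be distinct. If $x_k$ is an ancestor of $x_i$ in $G$ and $x_k\perp\!\!\!\perp x_j\mid x_i$, then (1) there is no backdoor path between $x_i$ and $x_j$ in $G$, and (2) $x_j$ is not an ancestor of $x_i$.
   Context: Model: $X$ is a finite set of observed random variables and $U$ a finite set of unobserved random variables; $V=X\cup U$ and $G=(V,E)$ is a DAG on $V$. Each $v_i\in V$ satisfies $v_i=\sum_{x_j\in \mathrm{pa}(v_i)\cap X} f^{(i)}_j(x_j)+\sum_{u_k\in\mathrm{pa}(v_i)\cap U} f^{(i)}_k(u_k)+n_i$, where the $f$'s are nonlinear functions and the external noises $n_i$ are jointly independent. ''Parent'', ''ancestor'', ''path'', ''d-separation'' refer to $G$ (a path has distinct vertices). Causal Faithfulness Condition (CFC): any conditional independence among variables of $V$ that is not entailed by d-separation in $G$ does not hold. $\perp\!\!\!\perp$ denotes statistical independence. A backdoor path between $x_i$ and $x_j$ is a path in $G$ of the form $x_i\leftarrow\cdots\leftarrow v\to\cdots\to x_j$ for some vertex $v\in V$ (the vertices on it may be observed or unobserved). *)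

(* Defs.v *)
From HB Require Import structures.
From mathcomp Require Import all_boot all_order all_algebra.
From mathcomp Require Import all_classical all_reals all_analysis.

Set Implicit Arguments.
Unset Strict Implicit.
Unset Printing Implicit Defensive.

Import Order.TTheory GRing.Theory Num.Theory.
Local Open Scope classical_set_scope.
Local Open Scope ring_scope.

(* E x y means the directed edge x -> y.                                   *)

Section Graph.
Variables (V : finType) (E : rel V).

Definition acyclic_graph : Prop := forall x y, E x y -> ~~ connect E y x.

Definition ancestor (a b : V) : Prop := a != b /\ connect E a b.

Definition adj (x y : V) : bool := E x y || E y x.

Definition is_gpath (a b : V) (q : seq V) : Prop :=
  [/\ path adj a q, last a q = b & uniq (a :: q)].

(* Interior vertex number t (0 < t < size q) of the path a :: q is blocked
   by the conditioning set S. *)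
Definition blocked_at (a : V) (q : seq V) (S : {set V}) (t : nat) : Prop :=
  let s := a :: q in
  let w := nth a s t in
  let collider := E (nth a s t.-1) w && E (nth a s t.+1) w in
  (collider /\ ~~ [exists z in S, connect E w z]) \/ (~~ collider /\ w \in S).

Definition dsep (a b : V) (S : {set V}) : Prop :=
  forall q, is_gpath a b q ->
    exists2 t, (0 < t < size q)%N & blocked_at a q S t.

Definition dsep_set (A B S : {set V}) : Prop :=
  forall a b, a \in A -> b \in B -> dsep a b S.

Definition backdoor_path (a b : V) (q : seq V) : Prop :=
  let s := a :: q in
  is_gpath a b q /\
  exists2 t, (0 < t < size q)%N &
    (forall u, (u < t)%N -> E (nth a s u.+1) (nth a s u)) /\
    (forall u, (t <= u < size q)%N -> E (nth a s u) (nth a s u.+1)).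

End Graph.

Section Prob.
Context {R : realType} {d : measure_display} {T : measurableType d}.
Variable (P : probability T R).
Context {V : finType}.
Variable (v : V -> T -> R).

Definition sig_of (S : {set V}) : set (set T) :=
  <<s [set A | exists s (Y : set R), [/\ s \in S, measurable Y &
                                          A = v s @^-1` Y]] >>.

(* Conditional independence  A _||_ B | S  : for every event F of sigma(B),
   the conditional probability P(F | sigma(A u S)) admits a
   sigma(S)-measurable version (equivalently P(F | A,S) = P(F | S) a.s.). *)
Definition cond_indep (A B S : {set V}) : Prop :=
  forall F : set T, sig_of B F ->
    exists g : T -> R,
      [/\ (forall Y : set R, measurable Y -> sig_of S (g @^-1` Y)),
          P.-integrable setT (EFin \o g) &
          forall H : set T, sig_of (A :|: S) H ->
            P (F `&` H) = (\int[P]_(x in H) (g x)%:E)%E].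

Definition mutually_indep (n : V -> T -> R) : Prop :=
  forall B : V -> set R, (forall i, measurable (B i)) ->
    P (\bigcap_(i in [set: V]) (n i @^-1` B i)) =
    (\prod_(i : V) P (n i @^-1` B i))%E.

End Prob.

Definition nonlinear {R : realType} (f : R -> R) : Prop :=
  ~ exists a : R, forall x, f x = a * x.

(* Main.v *)
Require Import Defs.
From HB Require Import structures.
From mathcomp Require Import all_boot all_order all_algebra.
From mathcomp Require Import all_classical all_reals all_analysis.
Import Order.TTheory GRing.Theory Num.Theory.

Set Implicit Arguments.
Unset Strict Implicit.
Section L8.
Local Open Scope nat_scope.
Variables (V : finType) (E : rel V) (xi xj : V).
Hypothesis hdag : acyclic_graph E.

Lemma noloop2 a b : E a b -> E b a -> False.
Proof. by move=> h1 h2; move: (hdag h1); rewrite connect1. Qed.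

Fixpoint tri (Q : V -> V -> V -> bool) (s : seq V) : bool :=
  match s with
  | a :: ((b :: c :: _) as s') => Q a b c && tri Q s'
  | _ => true end.

Lemma tri_cons Q x l : tri Q (x :: l) -> tri Q l.
Proof. by case: l => [|b [|c l]] //= /andP[]. Qed.

Lemma tri_cat Q l1 l2 : tri Q (l1 ++ l2) -> tri Q l2.
Proof. elim: l1 => [|x l1 IH] //= h; apply: IH; exact: tri_cons h. Qed.

Lemma tri_nth Q x0 s : tri Q s <->
  (forall t, 0 < t < (size s).-1 -> Q (nth x0 s t.-1) (nth x0 s t) (nth x0 s t.+1)).
Proof.
elim: s => [|a s IH]; first by split=> // _ [|t].
case: s IH => [|b [|c l]] IH; first by split=> // _ [|[|t]].
  by split=> // _ [|[|t]].
split.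
- move=> h; have /andP[hq ht] : Q a b c && tri Q [:: b, c & l] := h.
  move=> [|[|t]] ts //.
  exact: (IH.1 ht t.+1 ts).
- move=> h /=; apply/andP; split; first exact: (h 1).
  apply/IH => t /andP[t0 ts]; case: t t0 ts => [|t] // _ ts.
  exact: (h t.+2).
Qed.

Lemma split_mem (s : seq V) y : y \in s -> exists l1 l2, s = l1 ++ y :: l2.
Proof. by move=> /splitPr [l1 l2]; exists l1, l2. Qed.

Lemma path_suffix (r : rel V) a q l1 y q2 :
  a :: q = l1 ++ y :: q2 -> path r a q -> path r y q2.
Proof.
case: l1 => [|b l1] /= [-> ->] //.
by rewrite cat_path => /andP[_] /= /andP[_ ->].
Qed.

Lemma gpath_suffix a q l1 y q2 :
  a :: q = l1 ++ y :: q2 -> is_gpath E a xj q -> is_gpath E y xj q2.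
Proof.
move=> eq [hp hl hu]; split.
- exact: path_suffix eq hp.
- move: eq hl; case: l1 => [|b l1] /= [-> ->] //.
  by rewrite last_cat.
- by move: hu; rewrite eq cat_uniq => /and3P[_ _ ->].
Qed.

Definition Q a b c := if E a b && E c b then connect E b xi else b != xi.

Definition I y := exists q, is_gpath E y xj q /\ forall p, E p y -> tri Q (p :: y :: q).

Lemma step' y z : E y z -> I z ->
  exists q', is_gpath E y xj q' /\ tri Q (y :: q').
Proof.
move=> hyz [q [hg ht]].
case: (boolP (y \in z :: q)) => hin.
- have [l1 [q2 eq]] := split_mem hin.
  exists q2; split; first exact: gpath_suffix eq hg.
  by have := ht y hyz; rewrite eq -cat_cons; apply: tri_cat.
- exists (z :: q); split; last exact: ht.
  case: hg => hp hl hu; split => //.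
  + by rewrite /= hp /adj hyz.
  + by rewrite cons_uniq hin hu.
Qed.

Lemma step y z : E y z -> connect E z xi -> I z -> I y.
Proof.
move=> hyz hz hIz.
have yxi : y != xi.
  apply/eqP => e; move: (hdag hyz); rewrite -e in hz; by rewrite hz.
have hQ : forall p c, Q p y c.
  move=> p c; rewrite /Q; case: ifP => _ //.
  exact: (connect_trans (connect1 hyz) hz).
have [q' [hg ht]] := step' hyz hIz.
exists q'; split => // p _; case: q' hg ht => [|c l] //= _ ->.
by rewrite hQ.
Qed.

Lemma anc_I : I xi -> forall p y, path E y p -> last y p = xi -> I y.
Proof.
move=> hI; elim=> [|z p IH] y /=; first by move=> _ ->.
move=> /andP[hyz hp] hl; apply: (step hyz); last exact: IH hp hl.
by apply/connectP; exists p.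
Qed.

Lemma base q : is_gpath E xi xj q ->
  (forall t, 0 < t < size q -> ~~ (E (nth xi (xi::q) t.-1) (nth xi (xi::q) t)
         && E (nth xi (xi::q) t.+1) (nth xi (xi::q) t))) ->
  (0 < size q -> E (nth xi q 0) xi) -> I xi.
Proof.
move=> hg hnc hfirst; exists q; split => // p hp.
apply/(tri_nth _ xi) => t /andP[t0 ts].
case: t t0 ts => [|[|m]] // _ ts.
- rewrite /Q /= hp hfirst //; first exact: connect0.
- rewrite /Q /=.
  have hm : 0 < m.+1 < size q by [].
  have := hnc m.+1 hm; rewrite /= => /negbTE ->.
  case: hg => _ _ hu.
  have := nth_uniq xi (_ : m.+1 < size (xi :: q)) (_ : 0 < size (xi :: q)) hu.
  have s1 : m.+1 < size (xi :: q) by move: hm => /andP[_ h]; apply: ltnW.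
  by move=> /(_ s1 isT) /= ->.
Qed.

Lemma contra (xk : V) (S : {set V}) (hS : forall x, (x \in S) = (x == xi)) :
  ancestor E xk xi -> dsep E xk xj S -> I xi -> False.
Proof.
move=> [hki /connectP [p hp hl]] hsep hI.
case: p hp hl => [|z p] /=; first by move=> _ e; rewrite e eqxx in hki.
move=> /andP[hkz hp] hl.
have Iz := anc_I hI hp (esym hl).
have [q [hg ht]] := step' hkz Iz.
have [t tq hb] := hsep q hg.
have := (tri_nth Q xk (xk :: q)).1 ht t tq.
move: hb; rewrite /blocked_at /Q /=.
case: (E (nth xk (xk :: q) t.-1) (nth xk (xk :: q) t) &&
      E (nth xk (xk :: q) t.+1) (nth xk (xk :: q) t)) => /=.
- case=> [[_ /negP h] hc|[]//]; apply: h; apply/existsP; exists xi.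
  by rewrite hS eqxx.
- by case=> [[]//|[_]]; rewrite hS => ->.
Qed.

Definition K w := exists q, is_gpath E w xj q /\ path (fun a b => E b a) w q.

Lemma K_step a b : E a b -> K a -> K b.
Proof.
move=> hab [q [hg hr]].
case: (boolP (b \in a :: q)) => hin.
- have [l1 [q2 eq]] := split_mem hin.
  exists q2; split; first exact: gpath_suffix eq hg.
  exact: path_suffix eq hr.
- exists (a :: q); split; last by rewrite /= hab hr.
  case: hg => hp hl hu; split => //.
  + by rewrite /= hp /adj hab orbT.
  + by rewrite cons_uniq hin hu.
Qed.

Lemma K_path p : forall a, path E a p -> K a -> K (last a p).
Proof.
elim: p => [|z p IH] a //= /andP[haz hp] hK.
exact: IH hp (K_step haz hK).
Qed.

Lemma K_base : K xi -> I xi.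
Proof.
move=> [q [hg hr]]; apply: (base hg).
- move=> t /andP[t0 ts]; apply/negP => /andP[h1 _].
  case: t t0 ts h1 => [|t] // _ ts h1.
  have := (pathP xi hr) t (ltnW ts).
  move=> /= h2; exact: noloop2 h1 h2.
- by move=> q0; have := (pathP xi hr) 0 q0.
Qed.

End L8.

Local Open Scope classical_set_scope.
Local Open Scope ring_scope.

Theorem lemma8
  (R : realType) (d : measure_display) (T : measurableType d)
  (P : probability T R)
  (V : finType) (X : {set V}) (E : rel V)
  (v : V -> T -> R) (n : V -> T -> R) (f : V -> V -> R -> R)
  (* G = (V, E) is a DAG; X observed, ~: X unobserved *)
  (hdag : acyclic_graph E)
  (* the structural equations *)
  (hf_meas : forall i j, measurable_fun setT (f i j))
  (hf_nonlin : forall i j, E j i -> nonlinear (f i j))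
  (hn_meas : forall i, measurable_fun setT (n i))
  (hv_meas : forall i, measurable_fun setT (v i))
  (hsem : forall i w, v i w = \sum_(j : V | E j i) f i j (v j w) + n i w)
  (hn_indep : mutually_indep P n)
  (* Causal Faithfulness Condition *)
  (hCFC : forall A B S : {set V},
      A :&: B = finset.set0 -> A :&: S = finset.set0 -> B :&: S = finset.set0 ->
      cond_indep P v A B S -> dsep_set E A B S)
  (xi xj xk : V) (hi : xi \in X) (hj : xj \in X) (hk : xk \in X)
  (hij : xi != xj) (hik : xi != xk) (hjk : xj != xk)
  (hanc : ancestor E xk xi)
  (hci : cond_indep P v [set xk] [set xj] [set xi]) :
  (~ exists q, backdoor_path E xi xj q) /\ ~ ancestor E xj xi.
Proof.
have hsep : dsep E xk xj (finset.set1 xi).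
  have H := fun h1 h2 h3 => hCFC _ _ _ h1 h2 h3 hci xk xj.
  have := H _ _ _; rewrite !inE !eqxx; apply => //;
  by apply/setP => x; rewrite !inE; apply/negbTE/andP => -[/eqP -> /eqP e];
     subst; rewrite ?eqxx in hij hik hjk.
have hS : forall x, (x \in finset.set1 xi) = (x == xi) by move=> x; rewrite inE.
split.
- move=> [q [hg [t0 ht0 [hup hdown]]]].
  apply: (contra hdag hS hanc hsep); apply: (base hg).
  + move=> t /andP[tp ts]; apply/negP => /andP[h1 h2].
    case: (leqP t t0) => h.
    * have hlt : (t.-1 < t0)%N by rewrite (leq_trans _ h) // ltn_predL.
      have := hup t.-1 hlt; rewrite (prednK tp) => h3;
 exact (noloop2 hdag h1 h3).
    * have := hdown t; rewrite (ltnW h) ts => /(_ isT) h3.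
      exact (noloop2 hdag h2 h3).
  + move=> _; case/andP: ht0 => a _; exact: (hup 0 a).
- move=> [hji hc].
  apply: (contra hdag hS hanc hsep); apply: K_base => //.
  case/connectP: hc => p hp ->; apply: K_path => //.
  by exists [::]; split => //; split.
Qed.
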